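(* Let $\Gamma=\{f_1,\dots,f_n\}$ be a family of weak weight-functions such that $\mathsf{BGM}_\Gamma$ is shift-invariant. Then $\mathsf{BGM}_\Gamma$ is a pre-aggregation function which is $(k,\dots,k)$-increasing for every $k>0$.
   Context: A family of weak weight-functions (wFWF) is a family $\Gamma=\{f_i:[0,1]^n\to[0,1]\mid 1\le i\le n\}$ such that (I) $\sum_{i=1}^n f_i(\mathbf{x})\le 1$ for all $\mathbf{x}\in[0,1]^n$ and (II) $\sum_{i=1}^n f_i(1,\dots,1)=1$. The bounded generalized mixture function is $\mathsf{BGM}_\Gamma(\mathbf{x})=\sum_{i=1}^n f_i(\mathbf{x})\,x_i$. A function $F:[0,1]^n\to[0,1]$ is shift-invariant if $F(x_1+r,\dots,x_n+r)=F(\mathbf{x})+r$ whenever $r\in[-1,1]$, $(x_1+r,\dots,x_n+r)\in[0,1]^n$ and $F(\mathbf{x})+r\in[0,1]$. For a nonzero $\mathbf{r}\in\mathbb{R}^n$, $F$ is $\mathbf{r}$-increasing if $F(\mathbf{x})\le F(x_1+tr_1,\dots,x_n+tr_n)$ for all $\mathbf{x}\in[0,1]^n$ and $t>0$ with $(x_1+tr_1,\dots,x_n+tr_n)\in[0,1]^n$. $F$ is a pre-aggregation function if $F(0,\dots,0)=0$, $F(1,\dots,1)=1$ and $F$ is $\mathbf{r}$-increasing for some nonzero $\mathbf{r}\in[0,1]^n$. *)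

(* Defs.v *)
From mathcomp Require Import all_boot all_order all_algebra.
From mathcomp Require Import reals.
Set Implicit Arguments. Unset Strict Implicit. Unset Printing Implicit Defensive.
Import Order.TTheory GRing.Theory Num.Theory.
Local Open Scope ring_scope.

Section Defs.
Variables (R : realType) (n : nat).

Definition in01 (a : R) : Prop := 0 <= a /\ a <= 1.

Definition in_cube (x : 'I_n -> R) : Prop := forall i, in01 (x i).

Definition shiftv (x : 'I_n -> R) (r : R) : 'I_n -> R := fun i => x i + r.

Definition movev (x : 'I_n -> R) (t : R) (r : 'I_n -> R) : 'I_n -> R :=
  fun i => x i + t * r i.

(* A function [0,1]^n -> [0,1] is modelled as a total function on R^n whose
   values on the cube lie in [0,1]; only its values on the cube matter. *)
Definition maps_cube_01 (F : ('I_n -> R) -> R) : Prop :=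
  forall x, in_cube x -> in01 (F x).

Definition wFWF (f : 'I_n -> ('I_n -> R) -> R) : Prop :=
  (forall i, maps_cube_01 (f i)) /\
  (forall x, in_cube x -> \sum_(i < n) f i x <= 1) /\
  \sum_(i < n) f i (fun _ => 1) = 1.

Definition BGM (f : 'I_n -> ('I_n -> R) -> R) (x : 'I_n -> R) : R :=
  \sum_(i < n) f i x * x i.

Definition shift_invariant (F : ('I_n -> R) -> R) : Prop :=
  forall x r, -1 <= r <= 1 -> in_cube x -> in_cube (shiftv x r) ->
    in01 (F x + r) -> F (shiftv x r) = F x + r.

Definition r_increasing (F : ('I_n -> R) -> R) (r : 'I_n -> R) : Prop :=
  forall x t, in_cube x -> 0 < t -> in_cube (movev x t r) ->
    F x <= F (movev x t r).

Definition nonzero_vec (r : 'I_n -> R) : Prop := exists i, r i != 0.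

Definition pre_aggregation (F : ('I_n -> R) -> R) : Prop :=
  maps_cube_01 F /\
  F (fun _ => 0) = 0 /\ F (fun _ => 1) = 1 /\
  exists r, nonzero_vec r /\ in_cube r /\ r_increasing F r.

End Defs.

(* Main.v *)
Require Import Defs.
From mathcomp Require Import all_boot all_order all_algebra.
From mathcomp Require Import reals.
Import Order.TTheory GRing.Theory Num.Theory.
Local Open Scope ring_scope.

Theorem proposition9 (R : realType) (n : nat) (f : 'I_n -> ('I_n -> R) -> R) :
  wFWF f -> shift_invariant (BGM f) ->
  pre_aggregation (BGM f) /\
  (forall k : R, 0 < k -> r_increasing (BGM f) (fun _ => k)).
Proof.
move=> [f01 [fsum f1]] SI.
case: n f f01 fsum f1 SI => [|m] f f01 fsum f1 SI.
  by move: f1; rewrite big_ord0 => /eqP; rewrite eq_sym oner_eq0.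
have rinc : forall k : R, 0 < k -> r_increasing (BGM f) (fun _ => k).
  move=> k k0 x t xc t0 mc.
  have r0 : 0 < t * k by rewrite mulr_gt0.
  have hx : forall i, x i <= 1 - t * k.
    move=> i; have [_ h] := mc i; rewrite /movev in h.
    by rewrite lerBrDr.
  have B0 : 0 <= BGM f x.
    apply: sumr_ge0 => i _; apply: mulr_ge0; [exact: (f01 i x xc).1|exact: (xc i).1].
  have B1 : BGM f x <= 1 - t * k.
    apply: (le_trans (y := \sum_(i < m.+1) f i x * (1 - t * k))).
      apply: ler_sum => i _; apply: ler_wpM2l; [exact: (f01 i x xc).1|exact: hx].
    rewrite -mulr_suml; apply: ler_piMl.
      exact: le_trans (xc ord0).1 (hx ord0).
    exact: fsum.
  have -> : movev x t (fun _ => k) = shiftv x (t * k) by [].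
  have tk1 : t * k <= 1.
    by rewrite -subr_ge0; exact: le_trans (xc ord0).1 (hx ord0).
  rewrite SI //.
  - by rewrite lerDl ltW.
  - apply/andP; split=> //; rewrite (le_trans _ (ltW r0)) // oppr_le0 ler01 //.
  - split; first by rewrite addr_ge0 // ltW.
    by rewrite -lerBrDr.
split=> //.
split.
  move=> x xc; split.
    apply: sumr_ge0 => i _; apply: mulr_ge0; [exact: (f01 i x xc).1|exact: (xc i).1].
  apply: le_trans (fsum x xc); apply: ler_sum => i _.
  apply: ler_piMr; [exact: (f01 i x xc).1|exact: (xc i).2].
split.
  by rewrite /BGM big1 // => i _; rewrite mulr0.
split.
  by rewrite /BGM -[RHS]f1; apply: eq_bigr => i _; rewrite mulr1.
exists (fun _ => 1); split; first by exists ord0; rewrite oner_eq0.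
split; first by move=> i; split; rewrite ?ler01.
exact: rinc ltr01.
Qed.
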